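(* Let $Q$ be a completely semisimple inverse semigroup satisfying the ascending chain condition on the $\leq_{\mathcal{J}}$-order of its $\mathcal{J}$-classes. Then every left I-order in $Q$ is straight.
   Context: For an element $a$ of an inverse semigroup $Q$, $a^{-1}$ is its unique inverse. A subsemigroup $S$ of $Q$ is a left I-order in $Q$ if every $q\in Q$ can be written $q=a^{-1}b$ with $a,b\in S$; it is straight if $a,b$ can always be chosen with $a\,\mathcal{R}\,b$ in $Q$. An inverse semigroup is completely semisimple if no two distinct idempotents $e>f$ (in the natural order) are $\mathcal{D}$-related (equivalently, every principal factor is completely simple or completely 0-simple). The ascending chain condition on the $\leq_{\mathcal{J}}$-order means there is no infinite strictly ascending chain $J_1<J_2<\cdots$ of $\mathcal{J}$-classes, where $J_a\leq J_b$ iff $Q^1aQ^1\subseteq Q^1bQ^1$. *)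

(* Defs.v *)
Set Implicit Arguments.

Section InvSgp.
Variables (T : Type) (mul : T -> T -> T) (inv : T -> T).

Definition is_inverse_of (a x : T) : Prop :=
  mul (mul a x) a = a /\ mul (mul x a) x = x.

Definition IsInverseSemigroup : Prop :=
  (forall a b c, mul a (mul b c) = mul (mul a b) c) /\
  (forall a, is_inverse_of a (inv a) /\
             forall x, is_inverse_of a x -> x = inv a).

(* multiplication by an element of Q^1 = Q + {1}; None plays the role of 1 *)
Definition lmul1 (x : option T) (a : T) : T :=
  match x with None => a | Some x => mul x a end.
Definition rmul1 (a : T) (y : option T) : T :=
  match y with None => a | Some y => mul a y end.

Definition Rrel (a b : T) : Prop :=
  (exists y, a = rmul1 b y) /\ (exists y, b = rmul1 a y).
Definition Lrel (a b : T) : Prop :=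
  (exists x, a = lmul1 x b) /\ (exists x, b = lmul1 x a).
Definition Drel (a b : T) : Prop := exists c, Rrel a c /\ Lrel c b.

Definition idempotent (e : T) : Prop := mul e e = e.
Definition idem_le (f e : T) : Prop := f = mul e f /\ f = mul f e.

Definition completely_semisimple : Prop :=
  forall e f, idempotent e -> idempotent f -> idem_le f e -> e <> f ->
    ~ Drel e f.

(* J_a <= J_b  iff  Q^1 a Q^1 ⊆ Q^1 b Q^1  iff  a ∈ Q^1 b Q^1 *)
Definition leJ (a b : T) : Prop := exists x y, a = rmul1 (lmul1 x b) y.

Definition acc_J : Prop :=
  ~ exists f : nat -> T, forall n, leJ (f n) (f (S n)) /\ ~ leJ (f (S n)) (f n).

Definition subsemigroup (S : T -> Prop) : Prop :=
  forall a b, S a -> S b -> S (mul a b).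

Definition left_I_order (S : T -> Prop) : Prop :=
  subsemigroup S /\
  forall q, exists a b, S a /\ S b /\ q = mul (inv a) b.

Definition straight_left_I_order (S : T -> Prop) : Prop :=
  left_I_order S /\
  forall q, exists a b, S a /\ S b /\ Rrel a b /\ q = mul (inv a) b.

End InvSgp.

(* Main.v *)
Require Import Defs.
From Stdlib Require Import Classical ClassicalEpsilon.

Section IS.
Variables (T : Type) (mul : T -> T -> T) (inv : T -> T).
Hypothesis HI : IsInverseSemigroup mul inv.
Local Infix "·" := mul (at level 40, left associativity).

Lemma A a b c : a · (b · c) = a · b · c.
Proof. apply (proj1 HI). Qed.
Ltac norm := repeat rewrite A.
Ltac aeq := norm; reflexivity.

Lemma V1 x : x · inv x · x = x.
Proof. apply (proj1 (proj2 HI x)). Qed.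
Lemma V2 x : inv x · x · inv x = inv x.
Proof. apply (proj1 (proj2 HI x)). Qed.
Lemma U a y : a · y · a = a -> y · a · y = y -> y = inv a.
Proof. intros; apply (proj2 (proj2 HI a)); split; auto. Qed.
Lemma II x : inv (inv x) = x.
Proof. symmetry; apply U; [apply V2 | apply V1]. Qed.
Lemma idem_inv e : e · e = e -> inv e = e.
Proof. intro H; symmetry; apply U; rewrite H; auto. Qed.
Lemma idem_mul e f : e · e = e -> f · f = f -> (e · f) · (e · f) = e · f.
Proof.
  intros He Hf.
  remember (inv (e · f)) as x eqn:Hxdef.
  assert (Hv : x · (e · f) · x = x) by (subst x; apply V2).
  assert (Hx : f · x · e = x).
  { transitivity (inv (e · f)); [|now rewrite Hxdef]. apply U.
    - transitivity (e · f · x · (e · f)); [|rewrite Hxdef; apply V1].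
      transitivity (e · (f · f) · x · (e · e) · f); [aeq|]. rewrite He, Hf; aeq.
    - transitivity (f · x · (e · e) · (f · f) · x · e); [aeq|]. rewrite He, Hf.
      transitivity (f · (x · (e · f) · x) · e); [aeq|]. rewrite Hv; aeq. }
  assert (Hxx : x · x = x).
  { transitivity ((f · x · e) · (f · x · e)); [rewrite Hx; reflexivity|].
    transitivity (f · (x · (e · f) · x) · e); [aeq|]. rewrite Hv. exact Hx. }
  assert (Hef : e · f = x).
  { rewrite <- (II (e · f)), <- Hxdef. apply idem_inv; auto. }
  rewrite Hef; auto.
Qed.

Lemma idem_comm e f : e · e = e -> f · f = f -> e · f = f · e.
Proof.
  intros He Hf.
  assert (Hefi := idem_mul _ _ He Hf).
  assert (Hfe := idem_mul _ _ Hf He).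
  rewrite <- (idem_inv _ Hefi). symmetry. apply U.
  - transitivity (e · (f · f) · (e · e) · f); [aeq|]. rewrite He, Hf.
    transitivity ((e · f) · (e · f)); [aeq|]. auto.
  - transitivity (f · (e · e) · (f · f) · e); [aeq|]. rewrite He, Hf.
    transitivity ((f · e) · (f · e)); [aeq|]. auto.
Qed.

Lemma inv_mul x y : inv (x · y) = inv y · inv x.
Proof.
  assert (E2 : (inv x · x) · (y · inv y) = (y · inv y) · (inv x · x)).
  { apply idem_comm. transitivity (inv x · x · inv x · x); [aeq|]. rewrite V2; auto.
    transitivity (y · inv y · y · inv y); [aeq|]. rewrite V1; auto. }
  symmetry. apply U.
  - transitivity (x · ((y · inv y) · (inv x · x)) · y); [aeq|].
    rewrite <- E2. transitivity ((x · inv x · x) · (y · inv y · y)); [aeq|]. rewrite !V1; auto.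
  - transitivity (inv y · ((inv x · x) · (y · inv y)) · inv x); [aeq|].
    rewrite E2. transitivity ((inv y · y · inv y) · (inv x · x · inv x)); [aeq|]. rewrite !V2; auto.
Qed.

Lemma idL x : (x · inv x) · (x · inv x) = x · inv x.
Proof. transitivity (x · inv x · x · inv x); [aeq|]. rewrite V1; auto. Qed.
Lemma idR x : (inv x · x) · (inv x · x) = inv x · x.
Proof. transitivity (inv x · x · inv x · x); [aeq|]. rewrite V2; auto. Qed.

Lemma leJ_elim p q : leJ mul p q -> exists x y, p = x · q · y.
Proof.
  intros [x [y H]].
  assert (Hp : forall r, p = r -> p = p · inv p · r · (inv p · p)).
  { intros r Hr. rewrite <- Hr, V1, A, V1. reflexivity. }
  destruct x as [x|], y as [y|]; simpl in H; apply Hp in H.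
  - exists (p · inv p · x), (y · (inv p · p)). rewrite H at 1. aeq.
  - exists (p · inv p · x), (inv p · p). rewrite H at 1. aeq.
  - exists (p · inv p), (y · (inv p · p)). rewrite H at 1. aeq.
  - exists (p · inv p), (inv p · p). rewrite H at 1. aeq.
Qed.

Lemma leJ_intro p q x y : p = x · q · y -> leJ mul p q.
Proof. intro H. exists (Some x), (Some y). exact H. Qed.

Hypothesis CS : completely_semisimple mul.

Lemma cs_eq e F : e · e = e -> F · F = F -> F · e = e -> leJ mul F e -> e = F.
Proof.
  intros He HF HFe HJ.
  destruct (leJ_elim _ _ HJ) as [x [y Hxy]].
  set (v := F · x · e).
  set (g := inv v · v).
  assert (HeF : e · F = e) by (rewrite idem_comm; auto).
  assert (Hg : g · e = g).
  { unfold g, v. transitivity (inv (F · x · e) · (F · x · (e · e))); [aeq|]. rewrite He; auto. }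
  assert (HgF : g · F = g).
  { rewrite <- Hg at 1. rewrite <- A, HeF. exact Hg. }
  assert (Hgi : g · g = g) by apply idR.
  assert (HFg : F · g = g) by (rewrite idem_comm; auto).
  destruct (classic (F = g)) as [Heq|Hne].
  - rewrite <- HFe, Heq. exact Hg.
  - exfalso. apply (CS F g HF Hgi); auto.
    + split; auto.
    + exists v. split.
      * split.
        -- exists (Some (e · y · F)). simpl. unfold v.
           transitivity (F · F · F); [rewrite !HF; auto|].
           rewrite Hxy at 2. rewrite <- He at 1. aeq.
        -- exists (Some v). simpl. unfold v. transitivity (F · F · x · e); [rewrite HF; auto|aeq].
      * split.
        -- exists (Some v). simpl. unfold g. rewrite A. symmetry. apply V1.
        -- exists (Some (inv v)). reflexivity.
Qed.

Variable S : T -> Prop.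
Hypothesis Hsub : subsemigroup mul S.
Hypothesis Hrep : forall q, exists a b, S a /\ S b /\ q = inv a · b.

Lemma key e : e · e = e ->
  (forall f, leJ mul e f -> ~ leJ mul f e -> f · f = f -> exists s, S s /\ inv s · s = f) ->
  exists s, S s /\ inv s · s = e.
Proof.
  intros He IH.
  destruct (Hrep e) as [a [b [Sa [Sb Hab]]]].
  destruct (classic (leJ mul (a · inv a) e)) as [HJ|HJ].
  - exists a. split; auto. symmetry. apply cs_eq; auto.
    + apply idR.
    + rewrite Hab. transitivity (inv a · a · inv a · b); [aeq|]. rewrite V2; auto.
    + destruct (leJ_elim _ _ HJ) as [X [Y HXY]].
      apply (leJ_intro _ _ (inv a · X) (Y · a)).
      transitivity (inv a · (a · inv a) · a); [rewrite A, V2; auto|]. rewrite HXY. aeq.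
  - destruct (IH (a · inv a)) as [u [Su Hu]].
    + apply (leJ_intro _ _ (inv a) b). rewrite Hab. transitivity (inv a · a · inv a · b); [|aeq].
      rewrite V2; auto.
    + exact HJ.
    + apply idL.
    + exists (u · b). split; [apply Hsub; auto|].
      rewrite inv_mul. transitivity (inv b · (inv u · u) · b); [aeq|]. rewrite Hu.
      transitivity (inv (inv a · b) · (inv a · b)).
      * rewrite inv_mul, II. aeq.
      * rewrite <- Hab, idem_inv; auto.
Qed.

Hypothesis Hacc : acc_J mul.

Lemma all_idem e : e · e = e -> exists s, S s /\ inv s · s = e.
Proof.
  set (P := fun e => e · e = e -> exists s, S s /\ inv s · s = e).
  change (P e). revert e. apply NNPP. intro Hn.
  apply not_all_ex_not in Hn. destruct Hn as [e0 H0].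
  assert (step : forall e, ~ P e -> exists f, ~ P f /\ leJ mul e f /\ ~ leJ mul f e).
  { intros e Hne. apply NNPP. intro Hno. apply Hne. intro He. apply key; auto.
    intros f H1 H2 Hf. apply NNPP. intro Hpf. apply Hno. exists f. split; [intro Hp; apply Hpf, Hp, Hf | auto]. }
  assert (Hnext : forall b : {e | ~ P e}, {b' : {e | ~ P e} |
     leJ mul (proj1_sig b) (proj1_sig b') /\ ~ leJ mul (proj1_sig b') (proj1_sig b)}).
  { intros [e He]. destruct (constructive_indefinite_description _ (step e He)) as [f [Hf1 Hf2]].
    exists (exist _ f Hf1). simpl; auto. }
  apply Hacc.
  exists (fun n => proj1_sig (Nat.iter n (fun b => proj1_sig (Hnext b)) (exist _ e0 H0))).
  intro n. simpl. apply (proj2_sig (Hnext _)).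
Qed.

End IS.

Theorem theorem2p4 (T : Type) (mul : T -> T -> T) (inv : T -> T) :
  IsInverseSemigroup mul inv ->
  completely_semisimple mul ->
  acc_J mul ->
  forall S : T -> Prop, left_I_order mul inv S -> straight_left_I_order mul inv S.
Proof.
  intros HI CS Hacc S [Hsub Hrep].
  split; [split; auto|].
  intro q. destruct (Hrep q) as [a [b [Sa [Sb Hq]]]].
  set (e := mul (mul a (inv a)) (mul b (inv b))).
  assert (He : mul e e = e) by (apply (idem_mul _ _ _ HI); apply (idL _ _ _ HI)).
  destruct (all_idem _ _ _ HI CS S Hsub Hrep Hacc e He) as [s [Ss Hs]].
  assert (Hse : mul s e = s) by (rewrite <- Hs, (A _ _ _ HI), (V1 _ _ _ HI); auto).
  assert (Eb : mul e (mul b (inv b)) = e).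
  { unfold e. rewrite <- (A _ _ _ HI), (idL _ _ _ HI); auto. }
  assert (Ea : mul e (mul a (inv a)) = e).
  { unfold e. rewrite (idem_comm _ _ _ HI (mul a (inv a))); try apply (idL _ _ _ HI); auto.
    rewrite <- (A _ _ _ HI), (idL _ _ _ HI); auto. }
  exists (mul s a), (mul s b). repeat split; try apply Hsub; auto.
  - exists (Some (mul (inv b) a)). simpl. symmetry.
    transitivity (mul (mul (mul s e) (mul b (inv b))) a); [rewrite Hse; repeat rewrite (A _ _ _ HI); reflexivity|].
    rewrite <- (A _ _ _ HI s e), Eb, Hse; reflexivity.
  - exists (Some (mul (inv a) b)). simpl. symmetry.
    transitivity (mul (mul (mul s e) (mul a (inv a))) b); [rewrite Hse; repeat rewrite (A _ _ _ HI); reflexivity|].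
    rewrite <- (A _ _ _ HI s e), Ea, Hse; reflexivity.
  - rewrite (inv_mul _ _ _ HI), Hq. symmetry.
    transitivity (mul (mul (inv a) (mul (inv s) s)) b); [repeat rewrite (A _ _ _ HI); reflexivity|].
    rewrite Hs. unfold e.
    transitivity (mul (mul (mul (inv a) a) (inv a)) (mul (mul b (inv b)) b)); [repeat rewrite (A _ _ _ HI); reflexivity|].
    rewrite (V1 _ _ _ HI), (V2 _ _ _ HI). reflexivity.
Qed.
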